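(* Let $\underline{X}=(X_n,p_n)$ and $\underline{Y}=(Y_n,q_n)$ be inverse sequences of sets, let $(f_n,\Phi):\underline{X}\to\underline{Y}$ be a morphism of inverse sequences, let $(t_k)_{k\ge1}$ be integers with $t_1>\Phi(1),\Phi(2)$, $t_k>t_{k-1},\Phi(k+1)$ for $k\ge2$, and $f_i\circ p_{\Phi(i)t_k}=q_{i,k+1}\circ f_{k+1}\circ p_{\Phi(k+1)t_k}$ for all $i\le k$, and let $\hat f:(T_{\underline{X}},v)\to(T_{\underline{Y}},w)$ be the map defined below. Then $\hat f$ is non-expansive, i.e. $d(\hat f(x),\hat f(x'))\le d(x,x')$ for all $x,x'\in T_{\underline{X}}$.
   Context: For an inverse sequence of sets $(X_n,p_n)_{n\ge1}$ ($p_n:X_{n+1}\to X_n$, $p_{nm}=p_n\circ\cdots\circ p_{m-1}:X_m\to X_n$ for $n<m$, $p_{nn}=\mathrm{id}$), the tree $T_{\underline{X}}$ is the geometric realization of the graph with vertex set $\{v\}\sqcup\bigsqcup_n X_n$ and edges $\{x,p_n(x)\}$ for $x\in X_{n+1}$ and $\{x,v\}$ for $x\in X_1$, each edge of length 1, with the path metric, rooted at $v$; vertices of $X_n$ are at distance $n$ from $v$. Similarly $(T_{\underline{Y}},w)$. A morphism $(f_n,\Phi)$ consists of $\Phi:\mathbb{N}\to\mathbb{N}$ and maps $f_n:X_{\Phi(n)}\to Y_n$ such that for all $n'>n$ there is $m\ge\Phi(n),\Phi(n')$ with $f_n\circ p_{\Phi(n)m}=q_{nn'}\circ f_{n'}\circ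 p_{\Phi(n')m}$. Definition of $\hat f$: let $x\in T_{\underline{X}}$ with $t=d(v,x)$, and for each integer $j\le t$ let $x_j$ be the vertex of $X_j$ lying on the arc $[v,x]$. If $t\le t_1$ put $\hat f(x)=w$. If $t_k\le t\le t_{k+1}$ with $k\ge1$, put $y_0=w$ and $y_j=f_j(x_{\Phi(j)})\in Y_j$ for $j\ge1$; then $y_{k-1},y_k$ are adjacent vertices of $T_{\underline{Y}}$, and $\hat f(x)$ is the point of the edge $[y_{k-1},y_k]$ at distance $\frac{t-t_k}{t_{k+1}-t_k}$ from $y_{k-1}$. *)

(* Defs.v *)
From HB Require Import structures.
From mathcomp Require Import all_boot all_order all_algebra.
From mathcomp Require Import boolp reals.
Set Implicit Arguments. Unset Strict Implicit. Unset Printing Implicit Defensive.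
Import Order.TTheory GRing.Theory Num.Theory.

(* An inverse sequence of sets (X_n, p_n)_{n >= 1} is given by
   X : nat -> Type (only the levels n >= 1 are used; X 0 is irrelevant)
   and p n : X (n+1) -> X n. *)

Section InverseSequence.
Variables (X : nat -> Type) (p : forall n, X n.+1 -> X n).

Fixpoint pk (n k : nat) : X (k + n) -> X n :=
  match k return X (k + n) -> X n with
  | 0 => fun x => x
  | k'.+1 => fun x => @pk n k' (@p (k' + n) x)
  end.

Definition pp (n m : nat) (H : (n <= m)%N) (x : X m) : X n :=
  @pk n (m - n) (eq_rect m X x _ (esym (subnK H))).

Definition ppo (n m : nat) (x : X m) : option (X n) :=
  (if (n <= m)%N as b return ((n <= m)%N = b -> option (X n))
   then fun H => Some (pp H x) else fun _ => None) erefl.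

Local Open Scope ring_scope.
Variable R : realType.

(* Points of the tree T_X (geometric realization, edges of length 1):
   - Root is the root vertex v;
   - Pt n x s (n >= 1, x in X n, 0 <= s < 1) is the point of the edge
     [x, p_{n-1}(x)] (resp. [x, v] if n = 1) at distance s from x. *)
Inductive point : Type :=
| Root : point
| Pt : forall n : nat, X n -> R -> point.

Definition valid_point (a : point) : Prop :=
  match a with
  | Root => True
  | Pt n _ s => (0 < n)%N /\ 0 <= s /\ s < 1
  end.

Definition depth (a : point) : R :=
  match a with
  | Root => 0
  | Pt n _ s => n%:R - s
  end.

(* largest level j >= 1 at which the vertex arcs [v,x] and [v,y] agree
   (0 if none) *)
Definition common_level (n : nat) (x : X n) (m : nat) (y : X m) : nat :=
  (\max_(0 <= j < (minn n m).+1 | (0 < j)%N && `[< ppo j x = ppo j y >]) j)%N.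

(* d(v, a /\ b): length of the common part of the arcs [v,a] and [v,b] *)
Definition gromov (a b : point) : R :=
  match a, b with
  | Pt n x _, Pt m y _ =>
      Num.min (depth a) (Num.min (depth b) (common_level x y)%:R)
  | _, _ => 0
  end.

(* The path metric of the tree T_X (tree formula
   d(a,b) = d(v,a) + d(v,b) - 2 d(v, a /\ b)). *)
Definition tdist (a b : point) : R := depth a + depth b - 2 * gromov a b.

End InverseSequence.

Arguments pp {X} p n m H x.
Arguments ppo {X} p n {m} x.
Arguments Root {X R}.
Arguments Pt {X R} n x s.

Section Morphism.
Variables (X : nat -> Type) (p : forall n, X n.+1 -> X n).
Variables (Y : nat -> Type) (q : forall n, Y n.+1 -> Y n).
Variables (Phi : nat -> nat) (f : forall n, X (Phi n) -> Y n).
Arguments f : clear implicits.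

Definition is_morphism : Prop :=
  (forall n, (0 < n)%N -> (0 < Phi n)%N) /\
  forall n n' (Hnn' : (n <= n')%N), (0 < n)%N -> (n < n')%N ->
    exists m, exists H1 : (Phi n <= m)%N, exists H2 : (Phi n' <= m)%N,
      forall z : X m, f n (pp p (Phi n) m H1 z) = pp q n n' Hnn' (f n' (pp p (Phi n') m H2 z)).

Variables (t : nat -> nat) (R : realType).
Local Open Scope ring_scope.

(* For a point a with t = d(v,a):
   k = #{j >= 1 | t_j <= t}  (so t_k <= t < t_{k+1} when k >= 1,
   and k = 0 iff t < t_1); lam = (t - t_k)/(t_{k+1} - t_k);
   y_j = f_j(x_{Phi j}), y_0 = w; the image is the point of the edge
   [y_{k-1}, y_k] at distance lam from y_{k-1}. *)
Definition hatf (a : point X R) : point Y R :=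
  match a with
  | Root => Root
  | Pt n x s =>
      let d := n%:R - s in
      let k := (\sum_(1 <= j < n.+1) (((t j)%:R <= d)%R : nat))%N in
      if k == 0%N then Root else
      let lam := (d - (t k)%:R) / ((t k.+1)%:R - (t k)%:R) in
      if lam == 0 then
        (* the vertex y_{k-1} *)
        (if k == 1%N then Root else
         match ppo p (Phi k.-1) x with
         | Some z => Pt k.-1 (f k.-1 z) 0
         | None => Root
         end)
      else
        match ppo p (Phi k) x with
        | Some z => Pt k (f k z) (1 - lam)
        | None => Root
        end
  end.

End Morphism.

Arguments is_morphism {X} p {Y} q Phi f.
Arguments hatf {X} p {Y} Phi f t {R} a.

(* Main.v *)
Require Import Defs.
From HB Require Import structures.
From mathcomp Require Import all_boot all_order all_algebra.
From mathcomp Require Import boolp reals.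
From mathcomp Require Import ring lra zify.
Set Implicit Arguments. Unset Strict Implicit. Unset Printing Implicit Defensive.
Import Order.TTheory GRing.Theory Num.Theory.
Section PP.
Variables (X : nat -> Type) (p : forall n, X n.+1 -> X n).

Lemma pp_irr n m (H H' : (n <= m)%N) x : pp p n m H x = pp p n m H' x.
Proof. by rewrite (bool_irrelevance H H'). Qed.

Lemma pp_pk n k (H : (n <= k + n)%N) x : pp p n (k + n) H x = @pk X p n k x.
Proof.
rewrite /pp; move: (esym (subnK H)); rewrite addnK => e.
by rewrite (eq_irrelevance e erefl).
Qed.

Lemma pp_id n (H : (n <= n)%N) x : pp p n n H x = x.
Proof. exact: (pp_pk (k:=0)). Qed.

Lemma pp_S0 k j (H : (j <= (k + j).+1)%N) (H' : (j <= k + j)%N) x :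
  pp p j (k + j).+1 H x = pp p j (k + j) H' (p x).
Proof. by rewrite (pp_pk (k:=k.+1)) pp_pk. Qed.

Lemma pp_S j m (H : (j <= m.+1)%N) (H' : (j <= m)%N) x :
  pp p j m.+1 H x = pp p j m H' (p x).
Proof.
have := @pp_S0 (m - j) j; rewrite subnK //.
Qed.

Lemma pp_comp j k n (Hjk : (j <= k)%N) (Hkn : (k <= n)%N) (Hjn : (j <= n)%N) x :
  pp p j k Hjk (pp p k n Hkn x) = pp p j n Hjn x.
Proof.
elim: n Hkn Hjn x => [|n IH] Hkn Hjn x.
  have Ek : k = 0 by apply/eqP; rewrite -leqn0.
  subst k.
  by rewrite pp_id (pp_irr Hjk Hjn).
case: (ltngtP k n.+1) => Hk.
- have Hkn' : (k <= n)%N by [].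
  have Hjn' : (j <= n)%N by apply: leq_trans Hkn'.
  by rewrite (pp_S Hkn Hkn') (pp_S Hjn Hjn') IH.
- by have := Hkn; rewrite leqNgt Hk.
- subst k. by rewrite pp_id (pp_irr Hjk Hjn).
Qed.

Lemma ppoE j m (H : (j <= m)%N) (x : X m) : ppo p j x = Some (pp p j m H x).
Proof.
rewrite /ppo.
suff: forall b (e : (j <= m)%N = b),
  (if b as b' return ((j <= m)%N = b' -> option (X j))
   then fun H0 => Some (pp p j m H0 x) else fun _ => None) e = Some (pp p j m H x).
  by apply.
case=> e; first by rewrite (pp_irr e H).
by have := H; rewrite e.
Qed.

Lemma ppo_agree j n m (Hn : (j <= n)%N) (Hm : (j <= m)%N) (x : X n) (y : X m) :
  ppo p j x = ppo p j y -> pp p j n Hn x = pp p j m Hm y.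
Proof. by rewrite (ppoE Hn) (ppoE Hm) => -[]. Qed.
End PP.
Section Real.
Variables (R : realType) (t : nat -> nat).
Variable (Ht0 : (0 < t 1)%N).
Variable (Ht : forall j, (1 <= j)%N -> (t j < t j.+1)%N).
Local Open Scope ring_scope.

Lemma tmono j j' : (1 <= j)%N -> (j <= j')%N -> (t j + (j' - j) <= t j')%N.
Proof.
move=> Hj; elim: j' => [|j' IH]; first by rewrite leqn0 => /eqP E; subst j.
rewrite leq_eqVlt => /orP[/eqP <-|Hlt]; first by rewrite subnn addn0.
have := IH Hlt; have := Ht (leq_trans Hj Hlt).
rewrite subSn //; lia.
Qed.

Lemma tle j j' : (1 <= j)%N -> (j <= j')%N -> (t j <= t j')%N.
Proof. move=> H1 H2; have := tmono H1 H2; lia. Qed.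

Lemma tge j : (1 <= j)%N -> (j <= t j)%N.
Proof. move=> H1; have := tmono (leqnn 1) H1; lia. Qed.

Definition matched (k : nat) (d : R) :=
  (k = 0%N \/ (t k)%:R <= d) /\ d < (t k.+1)%:R.

Definition g (k : nat) (d : R) : R :=
  if k == 0%N then 0 else (k.-1)%:R + (d - (t k)%:R) / ((t k.+1)%:R - (t k)%:R).

Lemma matched_mono k k' d d' : matched k d -> matched k' d' -> d <= d' -> (k <= k')%N.
Proof.
move=> [[->//|Hk] _] [_ Hk'] Hdd.
rewrite leqNgt; apply/negP => Hlt.
have Ht2 := tle (ltn0Sn k') Hlt.
have : (t k'.+1)%:R <= (t k)%:R :> R by rewrite ler_nat.
lra.
Qed.

Lemma Delta_ge1 k : (1 <= k)%N -> 1 <= (t k.+1)%:R - (t k)%:R :> R.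
Proof.
move=> Hk; have H := Ht Hk.
rewrite -natrB ?(ltnW H) // ler1n; lia.
Qed.

Lemma frac_le (a D : R) : 0 <= a -> 1 <= D -> a / D <= a.
Proof. move=> Ha HD; rewrite ler_pdivrMr; nra. Qed.

Lemma frac_lt1 (a D : R) : a < D -> 0 < D -> a / D < 1.
Proof. move=> Ha HD; rewrite ltr_pdivrMr //; lra. Qed.

Lemma frac_ge0 (a D : R) : 0 <= a -> 0 < D -> 0 <= a / D.
Proof. move=> Ha HD; apply: divr_ge0 => //; lra. Qed.

Lemma g_bounds k d : matched k d -> (k.-1)%:R <= g k d /\ g k d <= k%:R.
Proof.
rewrite /g; case: eqP => [->|/eqP Hk0] /=; first by rewrite lexx.
move=> [[E|Hk] Hd]; first by move: Hk0; rewrite E.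
have Hk1 : (1 <= k)%N by rewrite lt0n.
have HD := Delta_ge1 Hk1.
have H1 := frac_ge0 (a := d - (t k)%:R) (D := (t k.+1)%:R - (t k)%:R).
have H2 := frac_lt1 (a := d - (t k)%:R) (D := (t k.+1)%:R - (t k)%:R).
have Ek : k%:R = (k.-1)%:R + 1 :> R by rewrite natr1 prednK.
split; [|rewrite Ek]; lra.
Qed.

Lemma g_lip k k' d d' : matched k d -> matched k' d' -> d <= d' ->
  g k d <= g k' d' /\ g k' d' - g k d <= d' - d.
Proof.
move=> Hm Hm' Hdd.
have Hkk := matched_mono Hm Hm' Hdd.
have [Gl Gu] := g_bounds Hm; have [Gl' Gu'] := g_bounds Hm'.
case: Hm => Hk Hd; case: Hm' => Hk' Hd'.
move: Hkk; rewrite leq_eqVlt => /orP[/eqP E|Hlt].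
- subst k'. rewrite /g; case: eqP => [_|/eqP Hk0]; first by lra.
  have Hk1 : (1 <= k)%N by rewrite lt0n.
  have HD := Delta_ge1 Hk1.
  have HD0 : (t k.+1)%:R - (t k)%:R != 0 :> R by apply: lt0r_neq0; lra.
  set D := (t k.+1)%:R - (t k)%:R.
  have {}HD : 1 <= D by exact: HD.
  have {}HD0 : D != 0 by exact: HD0.
  have -> : (k.-1)%:R + (d' - (t k)%:R) / D - ((k.-1)%:R + (d - (t k)%:R) / D)
           = (d' - d) / D by field.
  have E2 : (k.-1)%:R + (d - (t k)%:R) / D <= (k.-1)%:R + (d' - (t k)%:R) / D.
    rewrite lerD2l ler_pM2r ?invr_gt0; lra.
  split=> //; apply: frac_le => //; lra.
- have Hk'1 : (1 <= k')%N by apply: leq_ltn_trans Hlt.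
  have Ekk : (k%:R <= (k'.-1)%:R :> R) by rewrite ler_nat -ltnS prednK.
  split; first by lra.
  have Hk'0 : k' != 0%N by rewrite -lt0n.
  case: Hk' => [E|Htk']; first by move: Hk'0; rewrite E.
  have HD' := Delta_ge1 Hk'1.
  have Eg' : g k' d' = (k'.-1)%:R + (d' - (t k')%:R) / ((t k'.+1)%:R - (t k')%:R)
    by rewrite /g (negbTE Hk'0).
  have F' : (d' - (t k')%:R) / ((t k'.+1)%:R - (t k')%:R) <= d' - (t k')%:R
    by apply: frac_le => //; lra.
  have Tm := tmono (ltn0Sn k) Hlt.
  have Tm' : ((t k.+1)%:R + (k' - k.+1)%:R <= (t k')%:R :> R) by rewrite -natrD ler_nat.
  have Ek' : (k' - k.+1)%:R = (k'.-1)%:R - k%:R :> R.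
    have Ek1 : k'%:R = (k'.-1)%:R + 1 :> R by rewrite natr1 prednK.
    rewrite natrB // -natr1; lra.
  rewrite Ek' in Tm'.
  case: (posnP k) => [E|Hkpos].
  + subst k. have -> : g 0 d = 0 by [].
    rewrite Eg'.
    move: Tm'; rewrite /= subr0 => Tm'.
    lra.
  + case: Hk => [E|Htk]; first by move: Hkpos; rewrite E.
    have HD := Delta_ge1 Hkpos.
    have Hk0 : k != 0%N by rewrite -lt0n.
    have Eg : g k d = (k.-1)%:R + (d - (t k)%:R) / ((t k.+1)%:R - (t k)%:R)
      by rewrite /g (negbTE Hk0).
    have HD0 : (t k.+1)%:R - (t k)%:R != 0 :> R by apply: lt0r_neq0; lra.
    set D := (t k.+1)%:R - (t k)%:R in Eg HD HD0 *.
    have {}HD : 1 <= D by exact: HD.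
    have {}HD0 : D != 0 by exact: HD0.
    have E1 : 1 - (d - (t k)%:R) / D = ((t k.+1)%:R - d) / D.
      by move: HD0; rewrite /D => HD0; field.
    have F : ((t k.+1)%:R - d) / D <= (t k.+1)%:R - d by apply: frac_le => //; lra.
    have Ekm : k%:R = (k.-1)%:R + 1 :> R by rewrite natr1 prednK.
    rewrite Eg' Eg.
    lra.
Qed.

Definition ksum (N : nat) (d : R) := (\sum_(1 <= j < N.+1) (((t j)%:R <= d)%R : nat))%N.

Lemma ksum_inv N d : ((ksum N d <= N)%N /\ (forall j, (1 <= j)%N -> (j <= N)%N -> ((t j)%:R <= d) = (j <= ksum N d)%N)).
Proof.
elim: N => [|N [IH1 IH2]].
  rewrite /ksum big_geq //; split=> // j H1 H2; lia.
have E : ksum N.+1 d = (ksum N d + (((t N.+1)%:R <= d)%R : nat))%N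
  by rewrite /ksum big_nat_recr.
rewrite E; case: (boolP ((t N.+1)%:R <= d)) => HP /=.
- have HS : ksum N d = N.
    case: (posnP N) => [E0|HN]; first by move: IH1; rewrite E0 leqn0 => /eqP.
    apply/eqP; rewrite eqn_leq IH1 /= -IH2 //; apply: le_trans HP.
    by rewrite ler_nat; apply: tle.
  rewrite HS addn1; split=> // j H1 H2.
  have -> : (j <= N.+1)%N = true by [].
  by apply: le_trans HP; rewrite ler_nat; apply: tle.
- rewrite addn0; split; first lia.
  move=> j H1 H2; case: (ltngtP j N.+1) => Hj.
  + by apply: IH2.
  + lia.
  + subst j; rewrite (negbTE HP); apply/esym/negbTE; rewrite -ltnNge; lia.
Qed.

Lemma ksum_matched N d : d <= N%:R -> matched (ksum N d) d.
Proof.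
move=> HdN; have [I1 I2] := ksum_inv N d.
set k := ksum N d in I1 I2 *.
split.
  case: (posnP k) => [->|Hk]; [by left|right].
  by rewrite I2 // leqnn.
case: (leqP k.+1 N) => Hk.
  by rewrite ltNge I2 // ltnn.
have EkN : k = N by lia.
rewrite EkN; apply: le_lt_trans HdN _.
rewrite ltr_nat; have := tge (ltn0Sn N); lia.
Qed.

End Real.
Section CL.
Variables (X : nat -> Type) (p : forall n, X n.+1 -> X n).
Lemma cl_ge n m (x : X n) (y : X m) L : (1 <= L)%N -> (L <= minn n m)%N ->
  ppo p L x = ppo p L y -> (L <= common_level p x y)%N.
Proof.
move=> H1 H2 H3; rewrite /common_level.
have := @leq_bigmax_seq nat (index_iota 0 (minn n m).+1)
  (fun j => (0 < j)%N && `[< ppo p j x = ppo p j y >]) (fun j => j) L.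
apply.
  by rewrite mem_index_iota.
by rewrite H1 /=; apply/asboolP.
Qed.

Lemma cl_mem n m (x : X n) (y : X m) :
  common_level p x y = 0%N \/
  ((common_level p x y <= minn n m)%N /\
   ppo p (common_level p x y) x = ppo p (common_level p x y) y).
Proof.
rewrite /common_level big_seq_cond.
apply: (big_ind (fun c => c = 0%N \/ ((c <= minn n m)%N /\ ppo p c x = ppo p c y))).
- by left.
- move=> a b Ha Hb; by case: (leqP a b).
- move=> i /andP[]; rewrite mem_index_iota => /andP[_ Hi] /andP[_ /asboolP Hp].
  by right; split => //; rewrite -ltnS.
Qed.
End CL.

Section Main.
Variables (R : realType) (X : nat -> Type) (p : forall n, X n.+1 -> X n)
  (Y : nat -> Type) (q : forall n, Y n.+1 -> Y n)
  (Phi : nat -> nat) (f : forall n, X (Phi n) -> Y n) (t : nat -> nat).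
Arguments f : clear implicits.
Variable (Ht1 : (Phi 1 < t 1)%N /\ (Phi 2 < t 1)%N).
Variable (Htk : forall k, (2 <= k)%N -> (t k.-1 < t k)%N /\ (Phi k.+1 < t k)%N).
Variable (Hcompat : forall k i, (1 <= i)%N -> (i <= k)%N ->
     forall (Hi : (Phi i <= t k)%N) (Hk : (Phi k.+1 <= t k)%N)
            (Hik : (i <= k.+1)%N) (z : X (t k)),
       f i (pp p (Phi i) (t k) Hi z) = pp q i k.+1 Hik (f k.+1 (pp p (Phi k.+1) (t k) Hk z))).
Local Open Scope ring_scope.

Lemma Ht0 : (0 < t 1)%N.
Proof. case: Ht1; lia. Qed.

Lemma Ht j : (1 <= j)%N -> (t j < t j.+1)%N.
Proof. move=> Hj; by have [] := Htk (k := j.+1) (Hj : (1 < j.+1)%N). Qed.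

Lemma PhiS i : (1 <= i)%N -> (Phi i.+1 < t i)%N.
Proof.
case: i => [//|[|i]] _; first by case: Ht1.
by case: (Htk (k := i.+2) isT).
Qed.

Lemma PhiLt j : (1 <= j)%N -> (Phi j < t j)%N.
Proof.
case: j => [//|[|i]] _; first by case: Ht1.
have := PhiS (ltn0Sn i); have := Ht (ltn0Sn i); lia.
Qed.

Lemma vert m n (x : X n) (Hm : (Phi m <= n)%N) L (HL : (Phi L <= n)%N)
  (H1 : (1 <= L)%N) (HLm : (L <= m)%N) (Htm : (t m <= n)%N) :
  pp q L m HLm (f m (pp p (Phi m) n Hm x)) = f L (pp p (Phi L) n HL x).
Proof.
case: (ltngtP L m) => Hlt; last first.
- subst L; rewrite pp_id; congr (f m _); apply: pp_irr.
- by have := HLm; rewrite leqNgt Hlt.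
case: m Hm HLm Htm Hlt => [//|j] Hm HLm Htm Hlt.
have HLj : (L <= j)%N by [].
have Hj1 : (1 <= j)%N by apply: leq_trans HLj.
have Htj : (t j <= n)%N by have := Ht Hj1; lia.
have HiP : (Phi L <= t j)%N.
  have := PhiLt H1; have := tle Ht0 Ht H1 HLj; lia.
have HkP : (Phi j.+1 <= t j)%N by have := PhiS Hj1; lia.
have := Hcompat H1 HLj HiP HkP HLm (pp p (t j) n Htj x).
rewrite !pp_comp => <-.
by rewrite (pp_irr _ HL).
Qed.
About tle. About ksum_matched. About g_lip. About g_bounds.

Lemma hatf_desc n (x : X n) (s : R) : valid_point (Pt n x s) ->
  exists2 k, matched t k (n%:R - s) &
  ((hatf p Phi f t (Pt n x s) = Root /\ g t k (n%:R - s) = 0) \/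
   exists m, exists s', exists Hm : (Phi m <= n)%N,
     [/\ (1 <= m)%N, (t m <= n)%N, 0 <= s', m%:R - s' = g t k (n%:R - s) &
        hatf p Phi f t (Pt n x s) = Pt m (f m (pp p (Phi m) n Hm x)) s']).
Proof.
move=> [Hn [Hs0 Hs1]].
set d := n%:R - s.
have Hdn : d <= n%:R by rewrite /d; lra.
have Mk := ksum_matched Ht0 Ht Hdn.
exists (ksum t n d) => //.
set k := ksum t n d in Mk *.
rewrite /hatf -/d.
have Ek : (\sum_(1 <= j < n.+1) (((t j)%:R <= d)%R : nat))%N = k by [].
rewrite Ek.
case: eqP => [Hk0|/eqP Hk0].
  by left; split=> //; rewrite /g Hk0.
have Hk1 : (1 <= k)%N by rewrite lt0n.
case: Mk => [[E|Htkd] Hd]; first by move: Hk0; rewrite E.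
have Htkn : (t k <= n)%N by rewrite -(ler_nat R); lra.
have HD : 1 <= (t k.+1)%:R - (t k)%:R :> R := @Delta_ge1 R t Ht0 Ht k Hk1.
have Eg : g t k d = (k.-1)%:R + (d - (t k)%:R) / ((t k.+1)%:R - (t k)%:R)
  by rewrite /g (negbTE Hk0).
have lam0 : 0 <= (d - (t k)%:R) / ((t k.+1)%:R - (t k)%:R)
  by apply: frac_ge0; lra.
have lam1 : (d - (t k)%:R) / ((t k.+1)%:R - (t k)%:R) < 1
  by apply: frac_lt1; lra.
have Ekk : k%:R = (k.-1)%:R + 1 :> R by rewrite natr1 prednK.
case: eqP => [Hl0|/eqP Hl0].
- case: eqP => [Hk1'|/eqP Hk1'].
    left; split=> //; rewrite Eg Hl0 Hk1' /=; lra.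
  have Hk2 : (1 <= k.-1)%N by lia.
  have Htk1 : (t k.-1 <= n)%N.
    have := tle Ht0 Ht Hk2 (leq_pred k); lia.
  have HPm : (Phi k.-1 <= n)%N by have := PhiLt Hk2; lia.
  rewrite (ppoE p HPm); right; exists k.-1, 0, HPm; split => //.
  by rewrite Eg Hl0; lra.
- have HPk : (Phi k <= n)%N by have := PhiLt Hk1; lia.
  rewrite (ppoE p HPk); right.
  exists k, (1 - (d - (t k)%:R) / ((t k.+1)%:R - (t k)%:R)), HPk; split => //.
    lra.
  rewrite Eg; lra.
Qed.

Lemma hat_depth (a : point X R) : valid_point a -> exists2 k, matched t k (depth a) &
  depth (hatf p Phi f t a) = g t k (depth a).
Proof.
case: a => [|n x s] va.
  exists 0%N => //; split; [by left| rewrite /= ltr0n; exact: Ht0].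
have [k Mk [[E1 E2]|[m [s' [Hm [H1 H2 H3 H4 E]]]]]] := hatf_desc va;
  exists k => //.
  by rewrite E1 /= E2.
by rewrite E /= H4.
Qed.

Lemma depth_bound (a : point X R) : valid_point a -> exists N, depth a <= N%:R /\ 0 <= depth a.
Proof.
case: a => [|n x s] /=; first by exists 0%N; split.
move=> [Hn [Hs0 Hs1]]; exists n; split; first lra.
have : 1 <= n%:R :> R by rewrite ler1n.
lra.
Qed.

Lemma gromov_le (a b : point X R) : valid_point a -> valid_point b ->
  gromov p a b <= depth a /\ gromov p a b <= depth b.
Proof.
move=> va vb.
have [Na [_ Ha]] := depth_bound va; have [Nb [_ Hb]] := depth_bound vb.
case: a b va vb Ha Hb => [|n x s] [|m y s'] //= _ _ Ha Hb.
by rewrite !ge_min !lexx /= ?orbT.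
Qed.

Lemma minn3_le (z : R) a b c : z <= a%:R -> z <= b%:R -> z <= c%:R ->
  z <= (minn a (minn b c))%:R.
Proof.
move=> Ha Hb Hc.
have mP : forall u v, minn u v = u \/ minn u v = v.
  by move=> u v; case: (leqP u v) => h; [left|right].
have [->|->] := mP b c.
  by have [->|->] := mP a b.
by have [->|->] := mP a c.
Qed.

Lemma key (a b : point X R) kG : valid_point a -> valid_point b ->
  matched t kG (gromov p a b) ->
  g t kG (gromov p a b) <= depth (hatf p Phi f t a) ->
  g t kG (gromov p a b) <= depth (hatf p Phi f t b) ->
  g t kG (gromov p a b) <= gromov q (hatf p Phi f t a) (hatf p Phi f t b).
Proof.
move=> va vb MG HA HB.
set G := gromov p a b in MG HA HB *.
case: a va @G MG HA HB => [|na xa sa] va G MG HA HB.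
  by move: HA; rewrite /= .
have [ka Ma [[Ea _]|[ma [sa' [Hma [Hma1 Htma Hsa' _ Ea]]]]]] := hatf_desc va.
  by move: HA; rewrite Ea.
case: b vb @G MG HA HB => [|nb xb sb] vb G MG HA HB.
  by move: HB; rewrite Ea /=.
have [kb Mb [[Eb _]|[mb [sb' [Hmb [Hmb1 Htmb Hsb' _ Eb]]]]]] := hatf_desc vb.
  by move: HB; rewrite Eb Ea.
rewrite Ea Eb in HA HB *.
rewrite /gromov [depth (Pt ma _ _)]/= [depth (Pt mb _ _)]/=.
rewrite !le_min HA HB /=.
rewrite /= in HA HB.
set c := common_level p xa xb in G MG HA HB *.
have [Gl Gu] := g_bounds Ht0 Ht MG.
set gG := g t kG G in Gl Gu HA HB *.
have HL := @minn3_le gG kG ma mb Gu ltac:(lra) ltac:(lra).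
set L := minn kG (minn ma mb) in HL.
case: (posnP L) => [L0|Lpos].
  by apply: le_trans HL _; rewrite L0 ler_nat.
apply: le_trans HL _; rewrite ler_nat.
have HLk : (L <= kG)%N by rewrite /L geq_minl.
have HLma : (L <= ma)%N by rewrite /L; lia.
have HLmb : (L <= mb)%N by rewrite /L; lia.
have HkG1 : (1 <= kG)%N by lia.
case: MG => [[E|HtG] _]; first by move: HkG1; rewrite E.
have HGc : G <= c%:R by rewrite /G /gromov !ge_min lexx !orbT.
have Htc : (t kG <= c)%N by rewrite -(ler_nat R); lra.
have HPL : (Phi L < t L)%N := PhiLt Lpos.
have HtL : (t L <= t kG)%N := tle Ht0 Ht Lpos HLk.
have HPc : (Phi L <= c)%N by lia.
have c1 : (1 <= c)%N by lia.
have [c0|[Hcmin Hcag]] := cl_mem p xa xb; first by move: c1; rewrite /c c0.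
rewrite -/c in Hcmin Hcag.
have Hcna : (c <= na)%N by move: Hcmin; rewrite leq_min => /andP[].
have Hcnb : (c <= nb)%N by move: Hcmin; rewrite leq_min => /andP[].
have Hc := ppo_agree Hcna Hcnb Hcag.
apply: cl_ge => //.
  by rewrite leq_min HLma HLmb.
have HPLa : (Phi L <= na)%N by lia.
have HPLb : (Phi L <= nb)%N by lia.
rewrite (ppoE q HLma) (ppoE q HLmb).
rewrite (vert xa Hma HPLa Lpos HLma Htma) (vert xb Hmb HPLb Lpos HLmb Htmb).
by rewrite -(pp_comp p HPc Hcna HPLa) -(pp_comp p HPc Hcnb HPLb) Hc.
Qed.

End Main.

Theorem proposition4p2p1
  (R : realType)
  (X : nat -> Type) (p : forall n, X n.+1 -> X n)
  (Y : nat -> Type) (q : forall n, Y n.+1 -> Y n)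
  (Phi : nat -> nat) (f : forall n, X (Phi n) -> Y n)
  (t : nat -> nat)
  (Hmor : is_morphism p q Phi f)
  (Ht1 : (Phi 1 < t 1)%N /\ (Phi 2 < t 1)%N)
  (Htk : forall k, (2 <= k)%N -> (t k.-1 < t k)%N /\ (Phi k.+1 < t k)%N)
  (Hcompat : forall k i, (1 <= i)%N -> (i <= k)%N ->
     forall (Hi : (Phi i <= t k)%N) (Hk : (Phi k.+1 <= t k)%N)
            (Hik : (i <= k.+1)%N) (z : X (t k)),
       f i (pp p (Phi i) (t k) Hi z) = pp q i k.+1 Hik (f k.+1 (pp p (Phi k.+1) (t k) Hk z))) :
  forall a b : point X R, valid_point a -> valid_point b ->
    (tdist q (hatf p Phi f t a) (hatf p Phi f t b) <= tdist p a b)%R.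
Proof.
move=> a b va vb.
have T0 := Ht0 Ht1.
have T : forall j, (0 < j)%N -> (t j < t j.+1)%N := fun j => @Ht _ _ Htk j.
have [ka Ma Ea] := hat_depth p f Ht1 Htk va.
have [kb Mb Eb] := hat_depth p f Ht1 Htk vb.
have [Ga Gb] := gromov_le p va vb.
have [N [HN _]] := depth_bound va.
have HGN : (gromov p a b <= N%:R)%R by apply: le_trans HN.
have MG := ksum_matched T0 T HGN.
have [mona lipa] := g_lip T0 T MG Ma Ga.
have [monb lipb] := g_lip T0 T MG Mb Gb.
have HA : (g t (ksum t N (gromov p a b)) (gromov p a b) <= depth (hatf p Phi f t a))%R by rewrite Ea.
have HB : (g t (ksum t N (gromov p a b)) (gromov p a b) <= depth (hatf p Phi f t b))%R by rewrite Eb.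
have K := key Ht1 Htk Hcompat va vb MG HA HB.
rewrite /tdist Ea Eb.
move: K mona monb lipa lipb Ga Gb.
set x1 := g t _ _. set x2 := g t _ (depth a). set x3 := g t _ (depth b).
lra.
Qed.
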